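(* Let $G$ be a second countable locally compact abelian group, let $\varLambda\subseteq G$ be uniformly discrete, and let $\mathcal{A}=(A_n)_n$ be a van Hove sequence such that $\varLambda$ has positive density with respect to $\mathcal{A}$, i.e. $\liminf_{n\to\infty}\frac{\mathrm{card}(\varLambda\cap A_n)}{\mathrm{vol}(A_n)}>0$. Put $F_n=\varLambda\cap A_n$. (a) If $\gamma_{\mathrm{count}}$ is any vague cluster point of $(\gamma_{F_n})_n$, then there exist $C\in(0,\infty)$ and a vague cluster point $\gamma_{\mathrm{dens}}$ of $(\gamma_n)_n$ such that $\gamma_{\mathrm{dens}}=C\gamma_{\mathrm{count}}$. (b) If $\gamma_{\mathrm{dens}}$ is any vague cluster point of $(\gamma_n)_n$, then there exist $D\in(0,\infty)$ and a vague cluster point $\gamma_{\mathrm{count}}$ of $(\gamma_{F_n})_n$ such that $\gamma_{\mathrm{count}}=D\gamma_{\mathrm{dens}}$.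
   Context: $\mathrm{vol}$ is Haar measure. $\varLambda$ is uniformly discrete if there is a nonempty open $U\subseteq G$ such that every translate $t+U$ contains at most one point of $\varLambda$. A van Hove sequence is a sequence $(A_n)_n$ of compact sets of positive Haar measure with $\mathrm{vol}(\partial^K A_n)/\mathrm{vol}(A_n)\to0$ for every compact $K$, where $\partial^K A=((A+K)\setminus A^\circ)\cup((\overline{G\setminus A}-K)\cap A)$. For a finite set $F$, $\gamma_F=\frac{1}{\mathrm{card}(F)}\sum_{x,y\in F}\delta_{x-y}$ if $F\ne\emptyset$, $\gamma_\emptyset=0$; and $\gamma_n=\frac{1}{\mathrm{vol}(A_n)}\sum_{x,y\in F_n}\delta_{x-y}$. Cluster points are taken in the vague topology. *)

(* Defs.v *)
From HB Require Import structures.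
From mathcomp Require Import all_boot all_order all_algebra.
From mathcomp Require Import all_classical all_reals all_analysis.
Set Implicit Arguments. Unset Strict Implicit. Unset Printing Implicit Defensive.
Import Order.TTheory GRing.Theory Num.Theory.
Import numFieldNormedType.Exports.
Local Open Scope classical_set_scope.
Local Open Scope ring_scope.

Definition borelG (G : topologicalZmodType) : Type := G.
Section BorelInstance.
Context (G : topologicalZmodType).
HB.instance Definition _ := Choice.on (borelG G).
HB.instance Definition _ := isPointed.Build (borelG G) (0 : G)%R.
HB.instance Definition _ := @isMeasurable.Build (sigma_display (@open G))
  (borelG G) <<s @open G >> (@sigma_algebra0 _ setT _) (@sigma_algebraC _ _)
  (@sigma_algebra_bigcup _ setT _).
End BorelInstance.

Section Defs.
Context (R : realType) (G : topologicalZmodType).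

(* Haar measure on a locally compact abelian group: a Borel measure that is
   translation invariant, finite on compact sets and positive on nonempty
   open sets (on a second countable LCH space such a measure is Radon). *)
Definition haar_measure (mu : {measure set (borelG G) -> \bar R}) : Prop :=
  [/\ (forall (x : G) (A : set G), @measurable _ (borelG G) A ->
         mu [set x + a | a in A] = mu A),
      (forall K : set G, compact K -> (mu K < +oo)%E) &
      (forall U : set G, open U -> U !=set0 -> (0 < mu U)%E)].

Definition Cc (f : G -> R) : Prop :=
  continuous f /\ compact (closure [set x | f x != 0]).

Definition uniformly_discrete (L : set G) : Prop :=
  exists U : set G, [/\ open U, U !=set0 &
    forall (t x y : G), L x -> L y ->
      [set t + u | u in U] x -> [set t + u | u in U] y -> x = y].

Definition cardR (F : set G) : R := \sum_(x \in F) (1 : R).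

Definition vH_boundary (K A : set G) : set G :=
  ([set a + k | a in A & k in K] `\` interior A) `|`
  ([set b - k | b in closure (~` A) & k in K] `&` A).

Definition van_Hove (mu : {measure set (borelG G) -> \bar R})
    (A : nat -> set G) : Prop :=
  (forall n, compact (A n) /\ (0 < mu (A n))%E) /\
  (forall K : set G, compact K ->
     (fun n => fine (mu (vH_boundary K (A n))) / fine (mu (A n))) @ \oo
       --> (0 : R)).

Definition pos_density (mu : {measure set (borelG G) -> \bar R})
    (L : set G) (A : nat -> set G) : Prop :=
  (0 < limn_einf (fun n => (cardR (L `&` A n) / fine (mu (A n)))%:E))%E.

(* gamma_F, seen through its action on test functions:
   gamma_F(f) = 1/card F * sum_{x,y in F} f(x - y), gamma_emptyset = 0. *)
Definition gamma_count (F : set G) (f : G -> R) : R :=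
  if cardR F == 0 then 0
  else (cardR F)^-1 * \sum_(x \in F) \sum_(y \in F) f (x - y).

Definition gamma_dens (mu : {measure set (borelG G) -> \bar R})
    (L : set G) (A : nat -> set G) (n : nat) (f : G -> R) : R :=
  (fine (mu (A n)))^-1 *
    \sum_(x \in L `&` A n) \sum_(y \in L `&` A n) f (x - y).

(* nu (a Radon measure, i.e. a Borel measure finite on compact sets) is a
   cluster point of the sequence of measures s (given by their integrals
   against test functions) for the vague topology, i.e. the weak topology
   induced by the maps  mu |-> int f dmu,  f in C_c(G): every basic vague
   neighbourhood of nu is visited by s infinitely often. *)
Definition vague_cluster (s : nat -> (G -> R) -> R)
    (nu : {measure set (borelG G) -> \bar R}) : Prop :=
  (forall K : set G, compact K -> (nu K < +oo)%E) /\
  (forall (k : nat) (fs : 'I_k -> G -> R) (eps : R),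
     (forall i, Cc (fs i)) -> 0 < eps ->
     forall N : nat, exists2 n : nat, (N <= n)%N &
       forall i, (`| (s n (fs i))%:E - \int[nu]_x (fs i x)%:E | < eps%:E)%E).

End Defs.

(* Main.v *)
Require Import Defs.
From HB Require Import structures.
From mathcomp Require Import all_boot all_order all_algebra.
From mathcomp Require Import all_classical all_reals all_analysis.
From mathcomp Require Import ring lra measurable_realfun.
Import Order.TTheory GRing.Theory Num.Theory.
Import numFieldNormedType.Exports.
Local Open Scope classical_set_scope.
Local Open Scope ring_scope.
Set Implicit Arguments. Unset Strict Implicit. Unset Printing Implicit Defensive.

Section Topo.
Context (G : topologicalZmodType).

Lemma add_cont_r (x : G) : continuous (fun y : G => y + x).
Proof.
move=> y.
apply: (cvg_comp (fun y => (y, x)) (fun p : G * G => p.1 + p.2) (G := nbhs (y, x))).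
  by apply: cvg_pair; [exact: cvg_id | exact: cvg_cst].

exact: (@add_continuous G (y, x)).
Qed.

Lemma open_translate (x : G) (U : set G) : open U -> open [set x + u | u in U].
Proof.
move=> oU.
have -> : [set x + u | u in U] = (fun y => y + (- x)) @^-1` U.
  apply/seteqP; split => [_ [u Uu <-]|y Uy] /=.
    by rewrite addrC addKr.
  by exists (y - x) => //; rewrite addrC subrK.
by move: oU; apply: (proj1 (continuousP _)); exact: add_cont_r.
Qed.

Lemma open_neg (U : set G) : open U -> open [set - u | u in U].
Proof.
move=> oU.
have -> : [set - u | u in U] = (fun y : G => - y) @^-1` U.
  apply/seteqP; split => [_ [u Uu <-]|y Uy] /=.
    by rewrite opprK.
  by exists (- y) => //; rewrite opprK.
by move: oU; apply: (proj1 (continuousP _)); exact: opp_continuous.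
Qed.

Lemma compact_sum (A K : set G) : compact A -> compact K ->
  compact [set a + k | a in A & k in K].
Proof.
move=> cA cK; rewrite image2E; apply: continuous_compact.
  apply: continuous_subspaceT => p.
  have -> : uncurry +%R = (fun p : G * G => p.1 + p.2) by apply/funext => -[].
  exact: (@add_continuous G p).
exact: (@compact_setX G G A K cA cK).
Qed.

Lemma closed_sub_compact (F K : set G) : closed F -> compact K ->
  closed [set b - k | b in F & k in K].
Proof.
move=> cF cK z zcl.
pose B (N : set G) := [set k | K k /\ exists2 f, F f & N (f - k)].
pose FF := filter_from (nbhs z) B.
have FFf : Filter FF.
  apply: filter_from_filter; first by exists setT; exact: filterT.
  move=> N1 N2 h1 h2; exists (N1 `&` N2); first exact: filterI.
  by move=> k [Kk [f Ff [n1 n2]]]; split; split => //; exists f.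
have PF : ProperFilter FF.
  apply: filter_from_proper => // N Nz.
  have [_ [[f Ff [k Kk <-]] Nfk]] := zcl N Nz.
  by exists k; split => //; exists f.
have FK : FF K by exists setT => //; [exact: filterT | move=> k []].
have [k0 [Kk0 clk0]] := cK FF PF FK.
have Fzk : F (z + k0).
  apply: cF => M Mzk.
  have := @add_continuous G (z, k0) M Mzk.
  case => -[N P] /= [Nz Pk] sub.
  have [k [[Kk [f Ff Nfk]] Pk']] := clk0 (B N) P (ex_intro2 _ _ N Nz (fun _ h => h)) Pk.
  exists f; split => //.
  have := sub (f - k, k) (conj Nfk Pk') => /=.
  by rewrite subrK.
by exists (z + k0) => //; exists k0 => //; rewrite addrK.
Qed.

End Topo.
Section Topo2.
Context (G : topologicalZmodType).

Lemma exists_VW (L : set G) : locally_compact [set: G] -> uniformly_discrete L ->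
  exists V W : set G, [/\ open V, V !=set0, V `<=` W, compact W &
    forall x y, L x -> L y -> [set x + v | v in V] `&` [set y + v | v in V] !=set0 -> x = y].
Proof.
move=> lc [U [oU [u0 Uu0] disc]].
have [W Wn [cW clW]] := lc (- u0) I.
have nW : nbhs (- u0) W by move: Wn; rewrite withinET.
exists ([set - u | u in U] `&` interior W), W; split.
- apply: openI; first exact: open_neg.
  exact: open_interior.
- by exists (- u0); split; [exists u0 | exact: nW].
- by move=> y [_ /interior_subset].
- exact: cW.
- move=> x y Lx Ly [z [[v1 [[u1 U1 <-] _] e1] [v2 [[u2 U2 <-] _] e2]]].
  apply: (disc z) => //.
  + by exists u1 => //; rewrite -e1 subrK.
  + by exists u2 => //; rewrite -e2 subrK.
Qed.
End Topo2.
Section Meas.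
Context (R : realType) (G : topologicalZmodType).

Lemma open_mG (U : set G) : open U -> @measurable _ (borelG G) U.
Proof. by move=> oU; apply: sub_sigma_algebra. Qed.

Lemma closed_mG (U : set G) : closed U -> @measurable _ (borelG G) U.
Proof.
move=> cU; rewrite -(setCK U); apply: (@measurableC _ (borelG G)).
by apply: open_mG; exact: closed_openC.
Qed.

Lemma cont_mG (f : G -> R) : continuous f -> measurable_fun (setT : set (borelG G)) (f : borelG G -> R).
Proof.
move=> /continuousP cf; apply: (measurability _ (RGenOpens.measurableE R)).
move=> _ [_ [a [b ->] <-]]; rewrite setTI; apply: open_mG; apply: cf.
exact: interval_open.
Qed.

Lemma integral_mscale_cont (nu : {measure set (borelG G) -> \bar R}) (C : R) (C0 : 0 <= C) (f : G -> R) :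
  continuous f -> (\int[nu]_x (f x)%:E)%E \is a fin_num ->
  (\int[mscale (NngNum C0) nu]_x (f x)%:E = C%:E * \int[nu]_x (f x)%:E)%E.
Proof.
move=> cf; rewrite (integralE (mscale (NngNum C0) nu)) (integralE nu) fin_numB => /andP[p q].
have mf : measurable_fun (setT : set (borelG G)) ((EFin \o f) : borelG G -> \bar R).
  by apply/measurable_EFinP; exact: cont_mG.
rewrite !ge0_integral_mscale //=.
- by rewrite [RHS]muleBr //; exact: fin_num_adde_defr p.
- exact: measurable_funeneg.
- exact: measurable_funepos.
Qed.

End Meas.
Section Count.
Context (R : realType) (G : topologicalZmodType).

Lemma cardR_finite (F : set G) : cardR R F != 0 -> finite_set F.
Proof.
apply: contra_neqP => nfin; rewrite /cardR fsbig_dflt //.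
by apply: contra_not nfin; apply: sub_finite_set => x Fx; split => //= /eqP; rewrite oner_eq0.
Qed.

Lemma count_bound (vol : {measure set (borelG G) -> \bar R}) (L A V W : set G) :
  hausdorff_space G -> haar_measure vol -> open V -> V `<=` W -> compact W -> compact A ->
  (forall x y, L x -> L y -> [set x + v | v in V] `&` [set y + v | v in V] !=set0 -> x = y) ->
  cardR R (L `&` A) != 0 ->
  ((cardR R (L `&` A))%:E * vol V <= vol [set (a + k)%R | a in A & k in W])%E.
Proof.
move=> hG [hinv _ _] oV VW cW cA disc c0.
have Ffin := cardR_finite c0.
have mT x : @measurable _ (borelG G) [set x + v | v in V].
  by apply: open_mG; exact: open_translate.
have mAW : @measurable _ (borelG G) [set a + k | a in A & k in W].
  apply: closed_mG; apply: compact_closed => //; exact: compact_sum.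
have -> : ((cardR R (L `&` A))%:E * vol V)%E = vol (\bigcup_(x in L `&` A) [set x + v | v in V]).
  rewrite (measure_fin_bigcup vol Ffin) //; last first.
    by move=> x y [Lx _] [Ly _]; exact: disc.
  rewrite /cardR -fsumEFin // ge0_mule_fsuml //.
  apply: eq_fsbigr => x _; rewrite mul1e; symmetry; apply: hinv.
  exact: open_mG.
apply: le_measure; rewrite ?inE //.
- by apply: fin_bigcup_measurable => // x _; exact: mT.
- by move=> _ [x [_ Ax] [v Vv <-]]; exists x => //; exists v => //; exact: VW.
Qed.
End Count.
Section VH.
Context (R : realType) (G : topologicalZmodType).

Lemma compact_mG (A : set G) : hausdorff_space G -> compact A -> @measurable _ (borelG G) A.
Proof. by move=> hG cA; apply: closed_mG; exact: compact_closed. Qed.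

Lemma vh_bound (vol : {measure set (borelG G) -> \bar R}) (A W : set G) :
  hausdorff_space G -> haar_measure vol -> compact A -> compact W ->
  [/\ (vol [set (a + k)%R | a in A & k in W] <= vol A + vol (vH_boundary W A))%E,
      (vol (vH_boundary W A) < +oo)%E,
      (vol [set (a + k)%R | a in A & k in W] < +oo)%E &
      (vol A < +oo)%E].
Proof.
move=> hG [_ hfin _] cA cW.
have cAW := compact_sum cA cW.
have mA := compact_mG hG cA.
have mAW := compact_mG hG cAW.
have mbd : @measurable _ (borelG G) (vH_boundary W A).
  apply: (@measurableU _ (borelG G)).
    apply: (@measurableD _ (borelG G)) => //; apply: open_mG; exact: open_interior.
  apply: (@measurableI _ (borelG G)) => //; apply: closed_mG.
  apply: closed_sub_compact => //; exact: closed_closure.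
have sub1 : [set (a + k)%R | a in A & k in W] `<=` A `|` vH_boundary W A.
  move=> z Hz; have [iz|niz] := pselect (interior A z).
    by left; exact: interior_subset.
  by right; left; split.
have sub2 : vH_boundary W A `<=` [set (a + k)%R | a in A & k in W] `|` A.
  by move=> z [[? _]|[_ ?]]; [left|right].
have le1 : (vol [set (a + k)%R | a in A & k in W] <= vol A + vol (vH_boundary W A))%E.
  apply: le_trans (measureU2 _ _ _) => //.
  apply: le_measure; rewrite ?inE //; exact: (@measurableU _ (borelG G)).
have fAW := hfin _ cAW; have fA := hfin _ cA.
split => //.
apply: le_lt_trans (_ : (vol ([set (a + k)%R | a in A & k in W] `|` A) < +oo)%E).
  apply: le_measure; rewrite ?inE //; exact: (@measurableU _ (borelG G)).
apply: le_lt_trans (measureU2 _ _ _) _ => //.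
by rewrite lte_add_pinfty.
Qed.
End VH.
Lemma liminf_pos (R : realType) (u : nat -> R) :
  (0 < limn_einf (fun n => (u n)%:E))%E ->
  exists2 a : R, 0 < a & exists N, forall n, (N <= n)%N -> a <= u n.
Proof.
rewrite limn_einf_lim (cvg_lim _ (@cvg_einfs_sup R _)) //.
move=> /ereal_sup_gt [_ [N _ <-]] h.
have lb n : (N <= n)%N -> (einfs (fun n => (u n)%:E) N <= (u n)%:E)%E.
  by move=> Nn; apply: ereal_inf_lbound; exists n.
move: h lb; case E : (einfs _ N) => [e| |] // e0 lb.
- exists e; first by rewrite -lte_fin.
  by exists N => n /lb; rewrite lee_fin.
- by have := lb N (leqnn N); rewrite leye_eq.
Qed.
Section Dens.
Context (R : realType) (G : topologicalZmodType).

Definition dn (vol : {measure set (borelG G) -> \bar R}) (L : set G) (A : nat -> set G) n :=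
  cardR R (L `&` A n) / fine (vol (A n)).

Lemma density_bounds (vol : {measure set (borelG G) -> \bar R}) (L : set G) (A : nat -> set G) :
  hausdorff_space G -> locally_compact [set: G] ->
  haar_measure vol -> uniformly_discrete L -> van_Hove vol A -> pos_density vol L A ->
  exists a b N0, [/\ 0 < a &
    forall n, (N0 <= n)%N -> [/\ a <= dn vol L A n <= b, 0 < fine (vol (A n)) &
       cardR R (L `&` A n) != 0]].
Proof.
move=> hG lc hv ud [vA vHA] pd.
have [a a0 [N1 HN1]] := liminf_pos pd.
have [V [W [oV [v0 Vv0] VW cW disc]]] := exists_VW lc ud.
have [_ hfin hpos] := hv.
have mV : @measurable _ (borelG G) V by exact: open_mG.
have mW := compact_mG hG cW.
have Vpos : (0 < vol V)%E by apply: hpos => //; exists v0.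
have Vfin : (vol V < +oo)%E.
  by apply: le_lt_trans (hfin _ cW); apply: le_measure; rewrite ?inE.
set v := fine (vol V).
have Vv : vol V = v%:E by rewrite fineK // ge0_fin_numE // ltW.
have v0' : 0 < v by rewrite -lte_fin -Vv.
have := vHA W cW; move=> /cvgr_dist_lt /(_ _ ltr01) [N2 _ HN2].
exists a, (2 / v), (maxn N1 N2); split => // n Nn.
have N1n : (N1 <= n)%N := leq_trans (leq_maxl _ _) Nn.
have N2n : (N2 <= n)%N := leq_trans (leq_maxr _ _) Nn.
have [cAn Anpos] := vA n.
have [le1 bdfin AWfin Afin] := vh_bound hG hv cAn cW.
set vAn := fine (vol (A n)).
have Avn : vol (A n) = vAn%:E by rewrite fineK // ge0_fin_numE // ltW.
have vAn0 : 0 < vAn by rewrite -lte_fin -Avn.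
have ad := HN1 n N1n.
have c0 : cardR R (L `&` A n) != 0.
  apply: contraTneq ad => ->; rewrite /dn -/vAn mul0r -ltNge //.
split => //; rewrite ad /=.
have bdle : fine (vol (vH_boundary W (A n))) <= vAn.
  have := HN2 n N2n; rewrite sub0r normrN => h.
  have := le_lt_trans (ler_norm _) h.
  by rewrite ltr_pdivrMr // mul1r => /ltW.
have := count_bound hG hv oV VW cW cAn disc c0.
rewrite Vv.
set c := cardR R (L `&` A n) => hc.
have : (c%:E * v%:E <= (2 * vAn)%:E)%E.
  apply: le_trans hc _; apply: le_trans le1 _.
  have bdE : vol (vH_boundary W (A n)) = (fine (vol (vH_boundary W (A n))))%:E.
    by rewrite fineK // ge0_fin_numE.
  rewrite Avn bdE -EFinD lee_fin; lra.
rewrite -EFinM lee_fin => h.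
rewrite /dn -/vAn -/c ler_pdivrMr // mulrC mulrA ler_pdivlMr //.
by rewrite mulrC.
Qed.
End Dens.
Section Abstract.
Context (R : realType) (T : Type) (P : T -> Prop) (I : T -> \bar R).

Definition clusterP (s : nat -> T -> R) (J : T -> \bar R) :=
  forall (k : nat) (fs : 'I_k -> T) (eps : R),
     (forall i, P (fs i)) -> 0 < eps ->
     forall N : nat, exists2 n : nat, (N <= n)%N &
       forall i, (`| (s n (fs i))%:E - J (fs i)| < eps%:E)%E.

Lemma clusterP_fin s f : clusterP s I -> P f -> I f \is a fin_num.
Proof.
move=> cl Pf.
have [n _ /(_ ord0)] := cl 1%N (fun _ => f) 1 (fun=> Pf) ltr01 0%N.
case: (I f) => //= ; by rewrite ?lte_fin.
Qed.

Definition Jt := {k : nat & (('I_k -> T) * R * nat)%type}.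
Definition Jd : set Jt := fun j => let: existT k (fs, e, N) := j in
  (forall i, P (fs i)) /\ 0 < e.
Definition JS (s : nat -> T -> R) (j : Jt) : set nat :=
  let: existT k (fs, e, N) := j in
  [set n | (N <= n)%N /\ forall i, (`| (s n (fs i))%:E - I (fs i)| < e%:E)%E].

Lemma JS_cap s j1 j2 : Jd j1 -> Jd j2 -> exists2 j, Jd j & JS s j `<=` JS s j1 `&` JS s j2.
Proof.
case: j1 => k1 [[f1 e1] N1]; case: j2 => k2 [[f2 e2] N2] /= [P1 e10] [P2 e20].
pose g (i : 'I_(k1 + k2)) := match fintype.split i with inl a => f1 a | inr b => f2 b end.
exists (existT _ (k1 + k2)%N (g, Num.min e1 e2, maxn N1 N2)).
  split; last by rewrite lt_min e10 e20.
  by move=> i; rewrite /g; case: (fintype.split i).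
move=> n /= [Nn H]; split; split.
- exact: leq_trans (leq_maxl _ _) Nn.
- move=> i; have := H (lshift k2 i); rewrite /g.
  have -> : fintype.split (lshift k2 i) = inl i by rewrite -[lshift _ _]/(unsplit (inl i)) unsplitK.
  move=> /lt_le_trans; apply; rewrite lee_fin ge_min lexx //.
- exact: leq_trans (leq_maxr _ _) Nn.
- move=> i; have := H (rshift k1 i); rewrite /g.
  have -> : fintype.split (rshift k1 i) = inr i by rewrite -[rshift _ _]/(unsplit (inr i)) unsplitK.
  move=> /lt_le_trans; apply; rewrite lee_fin ge_min lexx orbT //.
Qed.

Lemma abstract_cluster (s u : nat -> T -> R) (d : nat -> R) (a b : R) (N0 : nat) :
  clusterP s I -> 0 < a ->
  (forall n, (N0 <= n)%N -> a <= d n <= b) ->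
  (forall n, (N0 <= n)%N -> forall f, u n f = d n * s n f) ->
  exists2 C : R, a <= C & clusterP u (fun f => C%:E * I f)%E.
Proof.
move=> cl a0 dab ueq.
pose F := filter_from Jd (fun j => d @` JS s j).
have FF : Filter F.
  apply: filter_from_filter.
    have fs0 : 'I_0 -> T by case=> m; rewrite ltn0.
    by exists (existT _ 0%N (fs0, 1, 0%N)); split => //; case.
  move=> i j Di Dj; have [k Dk Sk] := JS_cap s Di Dj; exists k => //.
  by move=> _ [n /Sk [Sn1 Sn2] <-]; split; exists n.
have PF : ProperFilter F.
  apply: filter_from_proper => // -[k [[fs e] N]] /= [Pf e0].
  have [n Nn Hn] := cl k fs e Pf e0 N.
  by exists (d n); exists n.
have Fab : F `[a, b]%classic.
  have fs0 : 'I_0 -> T by case=> m; rewrite ltn0.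
  exists (existT _ 0%N (fs0, 1, N0)); first by split => //; case.
  move=> _ [n [/= Nn _] <-]; have /andP[h1 h2] := dab n Nn.
  by rewrite /= in_itv /= h1 h2.
have [C [abC clC]] := segment_compact PF Fab.
move: abC; rewrite /= in_itv /= => /andP[aC Cb].
exists C => // k fs eps Pf e0 N.
have Ifin i : I (fs i) \is a fin_num := clusterP_fin (f := fs i) cl (Pf i).
pose M := \sum_i `|fine (I (fs i))|.
have M0 : 0 <= M by apply: sumr_ge0 => i _.
have b0 : 0 < b by apply: lt_le_trans a0 (le_trans aC Cb).
pose e1 := eps / (2 * (b + 1)).
pose dl := eps / (2 * (M + 1)).
have e10 : 0 < e1 by rewrite divr_gt0 // mulr_gt0 // ltr_wpDl // ltW.
have dl0 : 0 < dl by rewrite divr_gt0 // mulr_gt0 // ltr_wpDl.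
have Dj : Jd (existT _ k (fs, e1, maxn N N0)) by exact: (conj Pf e10).
have FB : F (d @` JS s (existT _ k (fs, e1, maxn N N0))) by exists (existT _ k (fs, e1, maxn N N0)).
have [_ [[n [Nn Hn] <-] /= Bd]] := clC _ _ FB (nbhsx_ballx C dl dl0).
exists n; first exact: leq_trans (leq_maxl _ _) Nn.
have N0n : (N0 <= n)%N := leq_trans (leq_maxr _ _) Nn.
move=> i; rewrite ueq //.
have := Hn i; rewrite -(fineK (Ifin i)) -EFinB -EFinM -EFinB !lte_fin.
set x := s n (fs i); set y := fine (I (fs i)) => hx.
have /andP[ad db] := dab n N0n.
have d0 : 0 <= d n by apply: le_trans ad; exact: ltW.
have yM : `|y| <= M.
  by rewrite /M (bigD1 i) //= lerDl sumr_ge0.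
have h1 : d n * `|x - y| <= b * e1.
  by apply: ler_pM => //; exact: ltW.
have h2 : `|d n - C| * `|y| <= dl * M.
  apply: ler_pM => //; apply: ltW; move: Bd; rewrite /ball /= distrC //.
have h3 : b * e1 < eps / 2.
  have -> : b * e1 = eps / 2 * (b / (b + 1)).
    by rewrite /e1; field; apply: lt0r_neq0; lra.
  rewrite gtr_pMr ?divr_gt0 // ltr_pdivrMr; lra.
have h4 : dl * M < eps / 2.
  have -> : dl * M = eps / 2 * (M / (M + 1)).
    by rewrite /dl; field; apply: lt0r_neq0; lra.
  rewrite gtr_pMr ?divr_gt0 // ltr_pdivrMr; lra.
have -> : d n * x - C * y = d n * (x - y) + (d n - C) * y by ring.
apply: le_lt_trans (ler_normD _ _) _.
rewrite !normrM (ger0_norm d0).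
have -> : eps = eps / 2 + eps / 2 by field.
apply: ltr_leD; first by apply: le_lt_trans h1 h3.
exact: ltW (le_lt_trans h2 h4).
Qed.

End Abstract.
Theorem theorem3p10 (R : realType) (G : topologicalZmodType)
    (vol : {measure set (borelG G) -> \bar R})
    (L : set G) (A : nat -> set G) :
  hausdorff_space G -> locally_compact [set: G] -> @second_countable G ->
  haar_measure vol ->
  uniformly_discrete L ->
  van_Hove vol A ->
  pos_density vol L A ->
  (forall gcount : {measure set (borelG G) -> \bar R},
     vague_cluster (fun n => gamma_count (L `&` A n)) gcount ->
     exists2 C : R, 0 < C &
       exists gdens : {measure set (borelG G) -> \bar R},
         vague_cluster (gamma_dens vol L A) gdens /\
         forall B : set G, @measurable _ (borelG G) B ->
           gdens B = (C%:E * gcount B)%E) /\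
  (forall gdens : {measure set (borelG G) -> \bar R},
     vague_cluster (gamma_dens vol L A) gdens ->
     exists2 D : R, 0 < D &
       exists gcount : {measure set (borelG G) -> \bar R},
         vague_cluster (fun n => gamma_count (L `&` A n)) gcount /\
         forall B : set G, @measurable _ (borelG G) B ->
           gcount B = (D%:E * gdens B)%E).
Proof.
move=> hG lc sc hv ud vH pd.
have [a [b [N0 [a0 HB]]]] := density_bounds hG lc hv ud vH pd.
have b0 : 0 < b.
  have [/andP[h1 h2] _ _] := HB N0 (leqnn _); exact: lt_le_trans a0 (le_trans h1 h2).
have key (nu : {measure set (borelG G) -> \bar R}) (C : R) (C0 : 0 < C) (u : nat -> (G -> R) -> R) :
   (forall K : set G, compact K -> (nu K < +oo)%E) ->
   clusterP (@Cc R G) u (fun f => C%:E * \int[nu]_x (f x)%:E)%E ->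
   (forall f, Cc f -> (\int[nu]_x (f x)%:E)%E \is a fin_num) ->
   vague_cluster u (mscale (NngNum (ltW C0)) nu).
  move=> hfin clC cl0; split.
    move=> K cK; rewrite /mscale /=; apply: lte_mul_pinfty => //; exact: hfin.
  move=> k fs eps Pf e0 N; have [n Nn Hn] := clC k fs eps Pf e0 N.
  exists n => // i; rewrite integral_mscale_cont; first exact: Hn.
    exact: (Pf i).1.
  exact: cl0.
have ueqa : forall n, (N0 <= n)%N -> forall f,
    gamma_dens vol L A n f = dn vol L A n * gamma_count (L `&` A n) f.
  move=> n Nn f; have [_ v0 c0] := HB n Nn.
  rewrite /gamma_dens /gamma_count /dn (negbTE c0).
  by field; rewrite c0 gt_eqF.
have ueqb : forall n, (N0 <= n)%N -> forall f,
    gamma_count (L `&` A n) f = (dn vol L A n)^-1 * gamma_dens vol L A n f.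
  move=> n Nn f; have [_ v0 c0] := HB n Nn.
  rewrite /gamma_dens /gamma_count /dn (negbTE c0).
  by field; rewrite c0 gt_eqF.
have dab : forall n, (N0 <= n)%N -> a <= dn vol L A n <= b.
  by move=> n Nn; have [h _ _] := HB n Nn.
have dab' : forall n, (N0 <= n)%N -> b^-1 <= (dn vol L A n)^-1 <= a^-1.
  move=> n Nn; have /andP[h1 h2] := dab n Nn.
  have dpos : 0 < dn vol L A n := lt_le_trans a0 h1.
  by rewrite !lef_pV2 ?posrE // h1 h2.
have ib0 : 0 < b^-1 by rewrite invr_gt0.
split.
- move=> gc [gfin gcl].
  have [C aC clC] := @abstract_cluster R (G -> R) (@Cc R G) (fun f => \int[gc]_x (f x)%:E)%E
    (fun n => gamma_count (L `&` A n)) (gamma_dens vol L A) (dn vol L A) a b N0 gcl a0 dab ueqa.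
  have C0 : 0 < C := lt_le_trans a0 aC.
  exists C => //; exists (mscale (NngNum (ltW C0)) gc).
  split; last by [].
  have K1 := key gc C C0 (gamma_dens vol L A) gfin clC.
  have K2 : forall f, Cc f -> (\int[gc]_x (f x)%:E)%E \is a fin_num.
    move=> f Pf; exact: (@clusterP_fin R (G -> R) (@Cc R G) (fun f => \int[gc]_x (f x)%:E)%E (fun n => gamma_count (L `&` A n)) f gcl Pf).
  exact: K1 K2.
- move=> gd [gfin gcl].
  have [C aC clC] := @abstract_cluster R (G -> R) (@Cc R G) (fun f => \int[gd]_x (f x)%:E)%E
    (gamma_dens vol L A) (fun n => gamma_count (L `&` A n)) (fun n => (dn vol L A n)^-1) b^-1 a^-1 N0 gcl
    ib0 dab' ueqb.
  have C0 : 0 < C := lt_le_trans ib0 aC.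
  exists C => //; exists (mscale (NngNum (ltW C0)) gd).
  split; last by [].
  have K1 := key gd C C0 (fun n => gamma_count (L `&` A n)) gfin clC.
  have K2 : forall f, Cc f -> (\int[gd]_x (f x)%:E)%E \is a fin_num.
    move=> f Pf; exact: (@clusterP_fin R (G -> R) (@Cc R G) (fun f => \int[gd]_x (f x)%:E)%E (gamma_dens vol L A) f gcl Pf).
  exact: K1 K2.
Qed.
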